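(* Let $\mathcal{M}=(E,\mathcal{B})$ be a matroid. If $\operatorname{rk}(\mathcal{M})\le 2$ or $|E|\le 5$, then the base configuration $V_{\mathcal{M}}$ is $2$-level.
   Context: The base configuration of a matroid $\mathcal{M}=(E,\mathcal{B})$ is $V_{\mathcal{M}}=\{\mathbf{1}_B:B\in\mathcal{B}\}\subset\mathbb{R}^E$. For a finite point set $V$ and an affine function $\ell$ nonnegative on $V$, $\{v\in V:\ell(v)=0\}$ is a face; inclusion-maximal faces different from $V$ are facets and the corresponding $\ell$ facet-defining. $V$ is $k$-level if every facet-defining affine function takes at most $k$ distinct values on $V$. *)

(* Defs.v *)
From HB Require Import structures.
From mathcomp Require Import all_boot all_order all_algebra.
From mathcomp Require Import reals.
Set Implicit Arguments. Unset Strict Implicit. Unset Printing Implicit Defensive.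
Import Order.TTheory GRing.Theory Num.Theory.
Local Open Scope ring_scope.

Definition matroid_bases (E : finType) (BB : {set {set E}}) : Prop :=
  BB != set0 /\
  forall B1 B2, B1 \in BB -> B2 \in BB -> forall x, x \in B1 :\: B2 ->
    exists2 y, y \in B2 :\: B1 & y |: (B1 :\ x) \in BB.

(* rank of the matroid: common size of the bases *)
Definition mrank (E : finType) (BB : {set {set E}}) : nat :=
  \max_(B in BB) #|B|.

Definition indicator (R : realType) (E : finType) (B : {set E}) : E -> R :=
  fun e => (e \in B)%:R.

Definition base_config (R : realType) (E : finType) (BB : {set {set E}})
  : (E -> R) -> Prop :=
  fun v => exists2 B, B \in BB & v = indicator R B.

Definition affine_eval (R : realType) (E : finType) (a : E -> R) (b : R)
  (x : E -> R) : R := \sum_(e : E) a e * x e + b.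

Definition nonneg_on (R : realType) (E : finType) (V : (E -> R) -> Prop)
  (a : E -> R) (b : R) : Prop :=
  forall v, V v -> 0 <= affine_eval a b v.

Definition zero_set (R : realType) (E : finType) (V : (E -> R) -> Prop)
  (a : E -> R) (b : R) : (E -> R) -> Prop :=
  fun v => V v /\ affine_eval a b v = 0.

Definition same_set (R : realType) (E : finType) (F G : (E -> R) -> Prop) :=
  forall v, F v <-> G v.

Definition subset_of (R : realType) (E : finType) (F G : (E -> R) -> Prop) :=
  forall v, F v -> G v.

Definition is_face (R : realType) (E : finType) (V F : (E -> R) -> Prop) : Prop :=
  exists a b, nonneg_on V a b /\ same_set F (zero_set V a b).

Definition is_facet (R : realType) (E : finType) (V F : (E -> R) -> Prop) : Prop :=
  is_face V F /\ ~ same_set F V /\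
  forall G, is_face V G -> ~ same_set G V -> subset_of F G -> subset_of G F.

Definition facet_defining (R : realType) (E : finType) (V : (E -> R) -> Prop)
  (a : E -> R) (b : R) : Prop :=
  nonneg_on V a b /\ is_facet V (zero_set V a b).

Definition k_level (R : realType) (E : finType) (k : nat)
  (V : (E -> R) -> Prop) : Prop :=
  forall a b, facet_defining V a b ->
    exists s : seq R, (size s <= k)%N /\
      forall v, V v -> affine_eval a b v \in s.

(* Main.v *)
Require Import Defs.
From mathcomp Require Import all_boot all_order all_algebra.
From mathcomp Require Import reals.
From mathcomp Require Import zify ring lra.
From Stdlib Require Import Classical.
Set Implicit Arguments. Unset Strict Implicit. Unset Printing Implicit Defensive.
Import Order.TTheory GRing.Theory Num.Theory.
Local Open Scope ring_scope.

Section Mat.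
Variables (R : realType) (E : finType) (BB : {set {set E}}).
Hypothesis exch : forall B1 B2, B1 \in BB -> B2 \in BB -> forall x, x \in B1 :\: B2 ->
    exists2 y, y \in B2 :\: B1 & y |: (B1 :\ x) \in BB.

Lemma card_exch (B : {set E}) x y : x \in B -> y \notin B -> #|y |: (B :\ x)| = #|B|.
Proof.
move=> xB yB; rewrite cardsU1 (cardsD1 x B) xB in_setD1 (negbTE yB) andbF /=.
by rewrite add1n.
Qed.

Lemma card_le_bases B1 B2 : B1 \in BB -> B2 \in BB -> (#|B2| <= #|B1|)%N.
Proof.
move=> h1; suff H : forall n B2, (#|B2 :\: B1| <= n)%N -> B2 \in BB -> (#|B2| <= #|B1|)%N.
  by move=> h2; apply: (H _ _ (leqnn _)).
elim=> [|n IH] {}B2.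
  rewrite leqn0 cards_eq0 setD_eq0 => sub _; exact: subset_leq_card.
move=> hn h2; have [e0|/set0Pn[x xD]] := eqVneq (B2 :\: B1) set0.
  by apply: subset_leq_card; rewrite -setD_eq0 e0.
have [y yD hB] := exch h2 h1 xD.
move: (xD) (yD); rewrite !inE => /andP[xB1 xB2] /andP[yB2 yB1].
rewrite -(card_exch xB2 yB2); apply: IH hB.
have sub : (y |: (B2 :\ x)) :\: B1 \subset (B2 :\: B1) :\ x.
  apply/subsetP=> z; rewrite !inE; case/andP=> zB1 /orP[/eqP zy|/andP[-> ->]].
    by rewrite zy yB1 in zB1.
  by rewrite zB1.
rewrite -ltnS; apply: leq_ltn_trans (subset_leq_card sub) _.
by rewrite (cardsD1 x (B2 :\: B1)) xD in hn.
Qed.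

Lemma dist_exch (B B0 : {set E}) x y : x \in B :\: B0 -> y \in B0 ->
  (#|(y |: (B :\ x)) :\: B0| < #|B :\: B0|)%N.
Proof.
move=> xD yB0.
have sub : (y |: (B :\ x)) :\: B0 \subset (B :\: B0) :\ x.
  apply/subsetP=> z; rewrite !inE; case/andP=> zB1 /orP[/eqP zy|/andP[-> ->]].
    by rewrite zy yB0 in zB1.
  by rewrite zB1.
apply: leq_ltn_trans (subset_leq_card sub) _.
by rewrite (cardsD1 x (B :\: B0)) xD.
Qed.

Definition W (a : E -> R) (B : {set E}) := \sum_(e in B) a e.

Lemma W_exch a (B : {set E}) x y : x \in B -> y \notin B ->
  W a (y |: (B :\ x)) = W a B - a x + a y.
Proof.
move=> xB yB; rewrite /W big_setU1 /=; last by rewrite !inE (negbTE yB) andbF.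
rewrite (big_setD1 x xB) /=; lra.
Qed.

Definition thr (a : E -> R) (t : R) := [set e | a e <= t].

Section Chain.
Variables (a : E -> R) (B0 : {set E}).
Hypothesis B0in : B0 \in BB.
Hypothesis B0min : forall B, B \in BB -> W a B0 <= W a B.

Lemma chain (t : R) B : B \in BB ->
  (#|B :&: thr a t| <= #|B0 :&: thr a t|)%N.
Proof.
set S := thr a t.
suff H : forall n B, (#|B :\: B0| <= n)%N -> B \in BB ->
  (#|B :&: S| <= #|B0 :&: S|)%N by apply: H.
elim=> [|n IH] {}B.
  rewrite leqn0 cards_eq0 setD_eq0 => sub _; apply: subset_leq_card.
  by apply: setSI.
move=> hn hB; rewrite leqNgt; apply/negP => hlt.
have [e0|/set0Pn[x xD]] := eqVneq (B :\: B0) set0.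
  move: e0 => /eqP; rewrite setD_eq0 => sub.
  by move: hlt; rewrite ltnNge (subset_leq_card (setSI S sub)).
case: (boolP [exists x in B :\: B0, x \notin S]).
  case/exists_inP=> {}x {}xD xS.
  have [y yD hB''] := exch hB B0in xD.
  move: (yD); rewrite inE => /andP[yB yB0].
  have := IH _ _ hB''.
  rewrite -ltnS; move/(_ (leq_trans (dist_exch xD yB0) hn)).
  apply/negP; rewrite -ltnNge; apply: leq_trans hlt _.
  apply: subset_leq_card; apply/subsetP=> z; rewrite !inE.
  case/andP=> zB zS; rewrite zB zS andbT orbC; apply/orP; left.
  by rewrite andbT; apply/eqP=> zx; move: xS; rewrite -zx /S /thr inE zS.
move/exists_inPn => allS.
have [y yD hB''] := exch hB B0in xD.
move: (yD) (xD); rewrite !inE => /andP[yB yB0] /andP[xB0 xB].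
case yS: (y \in S).
  have := IH _ _ hB''.
  rewrite -ltnS; move/(_ (leq_trans (dist_exch xD yB0) hn)).
  apply/negP; rewrite -ltnNge; apply: leq_trans hlt _.
  have -> : (y |: (B :\ x)) :&: S = y |: ((B :&: S) :\ x).
    apply/setP=> z; rewrite !inE; case: (z =P y) => [->|_] /=; last by rewrite andbA.
    by move: yS; rewrite /S /thr inE.
  rewrite card_exch //; first by rewrite inE xB /= (negbNE (allS x xD)).
  by rewrite inE (negbTE yB).
have yD' : y \in B0 :\: B by rewrite inE yB yB0.
have [w wD hB0'] := exch B0in hB yD'.
have wS := negbNE (allS w wD).
move: (wD); rewrite inE => /andP[wB0 wB].
have := B0min hB0'; rewrite W_exch //.
move: wS yS; rewrite !inE => wS /negbT; rewrite -ltNge => yS.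
lra.
Qed.
End Chain.

Definition piece (w : E -> R) (c : R) (B : {set E}) := \sum_(e in B) w e + c.

Lemma aeval_ind w c B : affine_eval w c (indicator R B) = piece w c B.
Proof.
rewrite /affine_eval /indicator /piece; congr (_ + _).
by rewrite [RHS]big_mkcond; apply: eq_bigr => e _; case: (e \in B); rewrite ?mulr1 ?mulr0.
Qed.

Lemma ind_sum (A : {set E}) : \sum_(e : E) ((e \in A)%:R : R) = #|A|%:R.
Proof. by rewrite -sum1_card natr_sum [RHS]big_mkcond; apply: eq_bigr => e _; case: (e \in A). Qed.

Lemma ind_sumI (A B : {set E}) : \sum_(e in B) ((e \in A)%:R : R) = #|B :&: A|%:R.
Proof.
rewrite big_mkcond -ind_sum; apply: eq_bigr => e _; rewrite inE.
by case: (e \in B); case: (e \in A).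
Qed.

Definition good_piece w c :=
  (forall B, B \in BB -> piece w c B = 0 \/ piece w c B = 1) /\
  (forall B, B \in BB -> 0 <= piece w c B).

Inductive Rep : ({set E} -> R) -> Prop :=
| Rep0 : Rep (fun _ => 0)
| RepP d w c : 0 <= d -> good_piece w c -> Rep (fun B => d * piece w c B)
| RepAdd f g : Rep f -> Rep g -> Rep (fun B => f B + g B)
| RepExt f g : Rep f -> (forall B, B \in BB -> f B = g B) -> Rep g.

Lemma Rep_ge0 f : Rep f -> forall B, B \in BB -> 0 <= f B.
Proof.
elim=> {f} [//|d w c hd [_ hg] B hB|f g _ IHf _ IHg B hB|f g _ IH e B hB].
- by apply: mulr_ge0 => //; apply: hg.
- by apply: addr_ge0; [apply: IHf | apply: IHg].
- by rewrite -e //; apply: IH.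
Qed.

Lemma Rep_scale f k : Rep f -> 0 <= k -> Rep (fun B => k * f B).
Proof.
move=> hf hk; elim: hf => {f} [|d w c hd hg|f g _ IHf _ IHg|f g _ IH e].
- by apply: RepExt Rep0 _ => B _; rewrite mulr0.
- by apply: RepExt (RepP (mulr_ge0 hk hd) hg) _ => B _; rewrite mulrA.
- by apply: RepExt (RepAdd IHf IHg) _ => B _; rewrite mulrDr.
- by apply: RepExt IH _ => B hB; rewrite e.
Qed.

Lemma Rep_sum (s : seq E) (F : E -> {set E} -> R) :
  (forall e, Rep (F e)) -> Rep (fun B => \sum_(e <- s) F e B).
Proof.
move=> hF; elim: s => [|e s IH].
  by apply: RepExt Rep0 _ => B _; rewrite big_nil.
by apply: RepExt (RepAdd (hF e) IH) _ => B _; rewrite big_cons.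
Qed.

Section Facet.
Variables (a : E -> R) (b : R).
Hypothesis hfd : facet_defining (@base_config R E BB) a b.

Lemma absorb w c : (forall B, B \in BB -> 0 <= piece w c B) ->
  (forall B, B \in BB -> piece a b B = 0 -> piece w c B = 0) ->
  (forall B, B \in BB -> piece w c B = 0) \/
  (forall B, B \in BB -> piece w c B = 0 -> piece a b B = 0).
Proof.
move=> hge hsub; case: (classic (forall B, B \in BB -> piece w c B = 0)) => h; [by left|right].
case: hfd => _ [_ [_ hmax]].
have hface : is_face (@base_config R E BB) (zero_set (@base_config R E BB) w c).
  exists w, c; split; last by [].
  by move=> v [B hB ->]; rewrite aeval_ind; apply: hge.
have hsub' := hmax _ hface.
have hneq : ~ same_set (zero_set (@base_config R E BB) w c) (@base_config R E BB).
  move=> hs; apply: h => B hB.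
  have [_] := (proj2 (hs (indicator R B))) (ex_intro2 _ _ B hB erefl).
  by rewrite aeval_ind.
have hs2 : subset_of (zero_set (@base_config R E BB) a b) (zero_set (@base_config R E BB) w c).
  move=> v [[B hB ->]]; rewrite !aeval_ind => h0; split; first by exists B.
  by rewrite aeval_ind; apply: hsub.
move=> B hB h0.
have hv : zero_set (@base_config R E BB) w c (indicator R B).
  by split; [exists B | rewrite aeval_ind].
have [_] := hsub' hneq hs2 _ hv.
by rewrite aeval_ind.
Qed.

Lemma key f : Rep f ->
  (forall B, B \in BB -> piece a b B = 0 -> f B = 0) ->
  exists D, forall B, B \in BB -> piece a b B <> 0 -> f B = D.
Proof.
elim=> {f} [|d w c hd [h01 hge]|f g hf IHf hg IHg|f g _ IH e] hZ.
- by exists 0.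
- have [->|dpos] := eqVneq d 0; first by exists 0 => B _ _; rewrite mul0r.
  have hz : forall B, B \in BB -> piece a b B = 0 -> piece w c B = 0.
    move=> B hB h0; have := hZ B hB h0; move/eqP; rewrite mulf_eq0 (negbTE dpos) /=.
    by move/eqP.
  case: (absorb hge hz) => h.
    by exists 0 => B hB _; rewrite h // mulr0.
  exists d => B hB hn; case: (h01 B hB) => [h0|->]; last by rewrite mulr1.
  by case: hn; apply: h.
- have hZf : forall B, B \in BB -> piece a b B = 0 -> f B = 0.
    move=> B hB h0; have := hZ B hB h0; have := Rep_ge0 hf hB; have := Rep_ge0 hg hB.
    lra.
  have hZg : forall B, B \in BB -> piece a b B = 0 -> g B = 0.
    move=> B hB h0; have := hZ B hB h0; rewrite (hZf B hB h0) add0r //.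
  have [D1 h1] := IHf hZf; have [D2 h2] := IHg hZg.
  by exists (D1 + D2) => B hB hn; rewrite h1 // h2.
- have [D hD] : exists D, forall B, B \in BB -> piece a b B <> 0 -> f B = D.
    by apply: IH => B hB h0; rewrite e //; apply: hZ.
  by exists D => B hB hn; rewrite -e //; apply: hD.
Qed.
End Facet.

Section Layer.
Variables (B0 : {set E}).
Hypothesis B0in : B0 \in BB.
Hypothesis card_eq : forall B, B \in BB -> #|B| = #|B0|.

Definition gS (S : {set E}) (B : {set E}) : R := #|B0 :&: S|%:R - #|B :&: S|%:R.

Lemma const_case (a : E -> R) : (forall e f, a e <= a f) ->
  forall B, B \in BB -> W a B = W a B0.
Proof.
move=> hc B hB; case: (pickP (fun _ : E => true)) => [e0 _|none].
  have h : forall e, a e = a e0 by move=> e; apply/le_anti; rewrite hc hc.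
  have hs : forall A : {set E}, W a A = a e0 *+ #|A|.
    by move=> A; rewrite /W -sumr_const; apply: eq_bigr => e _; apply: h.
  by rewrite !hs card_eq.
by rewrite /W !big1 // => e; move: (none e).
Qed.

Lemma gS0 : forall B, B \in BB -> gS set0 B = 0.
Proof. by move=> B _; rewrite /gS !setI0 cards0 subrr. Qed.

Lemma layer n (a : E -> R) :
  (#|[set e | [exists f, (a f < a e)%R]]| <= n)%N ->
  (forall s, Rep (gS (thr a s))) -> Rep (fun B => W a B - W a B0).
Proof.
elim: n a => [|n IH] a hn hS.
  apply: RepExt Rep0 _ => B hB; rewrite (const_case _ hB) ?subrr // => e f.
  rewrite leNgt; apply/negP => hlt.
  move: hn; rewrite leqn0 cards_eq0 => /eqP/setP/(_ e); rewrite !inE.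
  by move/negbT/existsPn/(_ f); rewrite hlt.
have [e0|/set0Pn[e1]] := eqVneq [set e | [exists f, (a f < a e)%R]] set0.
  apply: RepExt Rep0 _ => B hB; rewrite (const_case _ hB) ?subrr // => e f.
  rewrite leNgt; apply/negP => hlt.
  move: e0 => /setP/(_ e); rewrite !inE.
  by move/negbT/existsPn/(_ f); rewrite hlt.
rewrite inE => /existsP[f1 hf1].
set em := [arg min_(e < e1) a e]%O.
have hm : forall e, a em <= a e by rewrite /em; case: arg_minP => // i _ hi e; apply: hi.
have hm1 : a em < a e1 by apply: le_lt_trans (hm f1) hf1.
set et := [arg min_(e < e1 | a em < a e) a e]%O.
have [ht1 ht2] : a em < a et /\ forall e, a em < a e -> a et <= a e.
  by rewrite /et; case: arg_minP => // i hi hi2; split => // e he; apply: hi2.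
set m := a em; set t := a et.
pose a' e := if a e <= m then t else a e.
have hid : forall e, a' e = a e + (t - m) * ((e \in thr a m)%:R).
  move=> e; rewrite /a' inE; case: ifP => h; last by rewrite mulr0 addr0.
  have : a e = m by apply/le_anti; rewrite h hm.
  move=> ->; rewrite mulr1; lra.
have hW : forall B, W a B - W a B0 = (W a' B - W a' B0) + (t - m) * gS (thr a m) B.
  have hWa : forall B, W a' B = W a B + (t - m) * #|B :&: thr a m|%:R.
    move=> B; rewrite /W -ind_sumI mulr_sumr -big_split /=.
    by apply: eq_bigr => e _; apply: hid.
  by move=> B; rewrite !hWa /gS; ring.
apply: RepExt (RepAdd (IH a' _ _) (Rep_scale (k := t - m) (hS m) _)) _.
- have hta : forall f, t <= a' f.
    move=> f; rewrite /a'; case: ifP => // /negbT; rewrite -ltNge => h.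
    exact: ht2.
  have etX : et \in [set e | [exists f, (a f < a e)%R]] by rewrite inE; apply/existsP; exists em.
  have sub : [set e | [exists f, (a' f < a' e)%R]] \subset [set e | [exists f, (a f < a e)%R]] :\ et.
    apply/subsetP => e; rewrite inE => /existsP[f hf].
    have hte : t < a' e by apply: le_lt_trans (hta f) hf.
    move: hte; rewrite /a'; case: ifP => [_|/negbT hne]; first by rewrite ltxx.
    move=> hte; rewrite !inE; apply/andP; split.
      by apply/eqP => eet; move: hte; rewrite eet ltxx.
    by apply/existsP; exists em; rewrite ltNge.
  apply: leq_trans (subset_leq_card sub) _.
  by move: hn; rewrite (cardsD1 et) etX.
- move=> s; case: (boolP (t <= s)) => hts.
    have -> : thr a' s = thr a s.
      apply/setP => e; rewrite !inE /a'; case: ifP => // h.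
      by rewrite hts; symmetry; apply: le_trans h (le_trans (ltW ht1) hts).
    exact: hS.
  have -> : thr a' s = set0.
    apply/setP => e; rewrite !inE /a'; case: ifP => h; first by rewrite (negbTE hts).
    move/negbT: h; rewrite -ltNge => h; apply/negbTE; rewrite -ltNge.
    by apply: lt_le_trans (ht2 _ h); rewrite ltNge.
  by apply: RepExt Rep0 _ => B hB; rewrite gS0.
- by rewrite subr_ge0 ltW.
- by move=> B _; rewrite hW.
Qed.

Lemma piece_delta e B : piece (fun f => (f == e)%:R) 0 B = (e \in B)%:R.
Proof.
rewrite /piece addr0 (big_setID [set e]) /= setIC.
case: (boolP (e \in B)) => heB.
  have -> : [set e] :&: B = [set e] by apply/setP => f; rewrite !inE; case: eqP => // ->.
  rewrite big_set1 eqxx big1 ?addr0 // => f; rewrite !inE => /andP[/negbTE -> _] //.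
have -> : [set e] :&: B = set0.
  by apply/setP => f; rewrite !inE; case: eqP => // ->; rewrite (negbTE heB).
rewrite big_set0 add0r big1 // => f; rewrite !inE => /andP[/negbTE -> _] //.
Qed.

Lemma piece_ndelta e B : piece (fun f => - (f == e)%:R) 1 B = 1 - (e \in B)%:R.
Proof.
have := piece_delta e B; rewrite /piece sumrN addr0 => ->; lra.
Qed.

Lemma gS_rep S : (forall B, B \in BB -> (#|B :&: S| <= #|B0 :&: S|)%N) ->
  (#|B0| <= 2)%N \/ (#|E| <= 5)%N -> Rep (gS S).
Proof.
move=> hch hyp; set m := #|B0 :&: S|.
case: (boolP [forall B in BB, (m <= #|B :&: S| + 1)%N]) => hall.
  have hp : forall B, piece (fun e => - (e \in S)%:R) m%:R B = gS S B.
    by move=> B; rewrite /piece sumrN ind_sumI /gS; lra.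
  apply: RepExt (RepP (d := 1) (w := fun e => - (e \in S)%:R) (c := m%:R) ler01 _) _; last by move=> B _; rewrite mul1r hp.
  split => B hB; rewrite hp /gS; have := hch B hB; move/forall_inP: hall => /(_ B hB).
    rewrite -/m => h1 h2; have [->|->] : m = #|B :&: S| \/ m = (#|B :&: S| + 1)%N by lia.
      by left; rewrite subrr.
    by right; rewrite natrD; lra.
  by rewrite -/m => h1 h2; rewrite subr_ge0 ler_nat.
move/forall_inPn: hall => [B1 hB1 hlt]; rewrite -ltnNge in hlt.
have mB0 : (m <= #|B0|)%N by apply: subset_leq_card; apply: subsetIl.
have mS : (m <= #|S|)%N by apply: subset_leq_card; apply: subsetIr.
have [hm|hm] : m = #|B0| \/ m = #|S|.
  case: hyp => hyp; first by left; lia.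
  case: (leqP #|B0| 2) => h2; first by left; lia.
  right; have := cardsID B1 S; have := cardsC B1; rewrite card_eq // => hC hID.
  have : (#|S :\: B1| <= #|~: B1|)%N.
    by apply: subset_leq_card; apply/subsetP => e; rewrite !inE => /andP[].
  rewrite setIC in hID; lia.
- apply: RepExt (Rep_sum (index_enum E)
     (F := fun e B => (e \notin S)%:R * piece (fun f => (f == e)%:R) 0 B) _) _.
    move=> e; apply: RepP; first by apply: ler0n.
    split => B _; rewrite piece_delta; case: (e \in B) => /=; by [right|left|].
  move=> B hB; rewrite /gS.
  have -> : \sum_(e <- index_enum E) (e \notin S)%:R * piece (fun f => (f == e)%:R) 0 B
     = #|B :\: S|%:R.
    rewrite -ind_sum; apply: eq_bigr => e _; rewrite piece_delta !inE.
    by case: (e \in S); case: (e \in B); rewrite /= ?mulr0 ?mulr1 ?mul0r.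
  have := cardsID S B; rewrite (card_eq hB) -hm => h.
  rewrite -/m -h natrD; lra.
- apply: RepExt (Rep_sum (index_enum E)
     (F := fun e B => (e \in S)%:R * piece (fun f => - (f == e)%:R) 1 B) _) _.
    move=> e; apply: RepP; first by apply: ler0n.
    split => B _; rewrite piece_ndelta; case: (e \in B) => /=.
    + by left; rewrite subrr.
    + by right; rewrite subr0.
    + by rewrite subrr.
    + by rewrite subr0 ler01.
  move=> B hB; rewrite /gS.
  have -> : \sum_(e <- index_enum E) (e \in S)%:R * piece (fun f => - (f == e)%:R) 1 B
     = #|S :\: B|%:R.
    rewrite -ind_sum; apply: eq_bigr => e _; rewrite piece_ndelta !inE.
    by case: (e \in S); case: (e \in B); rewrite /= ?subrr ?subr0 ?mulr0 ?mulr1 ?mul0r.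
  have := cardsID B S; rewrite -hm setIC => h.
  rewrite -/m -h natrD; lra.
Qed.
End Layer.
End Mat.

Theorem proposition3p1 (R : realType) (E : finType) (BB : {set {set E}}) :
  matroid_bases BB ->
  (mrank BB <= 2)%N \/ (#|E| <= 5)%N ->
  k_level 2 (@base_config R E BB).
Proof.
move=> [BBne exch] hyp a b hfd.
have [B1 hB1] : exists B1, B1 \in BB by case/set0Pn: BBne => B1 h; exists B1.
set B0 := [arg min_(B < B1 in BB) W a B]%O.
have [B0in B0min] : B0 \in BB /\ forall B, B \in BB -> W a B0 <= W a B.
  by rewrite /B0; case: arg_minP => // i hi hmin; split => // B hB; apply: hmin.
have card_eq : forall B, B \in BB -> #|B| = #|B0|.
  by move=> B hB; apply/eqP; rewrite eqn_leq !(card_le_bases exch).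
have hyp' : (#|B0| <= 2)%N \/ (#|E| <= 5)%N.
  case: hyp => h; last by right.
  left; apply: leq_trans h; rewrite /mrank.
  by apply: (@leq_bigmax_cond _ (fun B => B \in BB) (fun B => #|B|)).
have hrep : Rep BB (fun B => W a B - W a B0).
  apply: (layer card_eq (n := #|E|)); first by apply: max_card.
  move=> s; apply: (gS_rep R B0in card_eq _ hyp') => B hB.
  exact: (chain exch B0in B0min).
have hK : 0 <= piece a b B0.
  by rewrite -aeval_ind; case: hfd => hnn _; apply: hnn; exists B0.
have hz : forall B, B \in BB -> piece a b B = 0 -> W a B - W a B0 = 0.
  move=> B hB h0; have := B0min B hB; move: h0 hK; rewrite /piece -/(W a B) -/(W a B0).
  lra.
have [D hD] := key hfd hrep hz.
exists [:: piece a b B0; piece a b B0 + D]; split; first by [].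
move=> v [B hB ->]; rewrite aeval_ind !inE.
have hle := B0min B hB.
have hpc : piece a b B = piece a b B0 + (W a B - W a B0) by rewrite /piece /W; ring.
case: (piece a b B =P 0) => h0.
  by apply/orP; left; apply/eqP; move: hK; rewrite hpc in h0 *; lra.
by apply/orP; right; apply/eqP; rewrite hpc hD.
Qed.
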